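(* Let $G$ be a finite simple graph, $r\geqslant 1$, let $\mathcal{C}$ be a minimal $r$-system of chorded cycles in $G$, and let $C\in\mathcal{C}$. Suppose the subgraph $H$ of $G$ induced by the vertices not lying on any cycle of $\mathcal{C}$ contains a path $x_1x_2x_3\cdots x_\ell$ with $\ell\geqslant 4$. Then (1) $d_C(x_1,x_3)+d_C(x_1,x_4)+d_C(x_2,x_4)\leqslant 12$; and, if $\ell\geqslant 5$, (2) $d_C(x_1,x_3)+d_C(x_2,x_4)+d_C(x_3,x_5)\leqslant 12$; (3) if moreover $x_2x_4\in E(G)$, then $d_C(x_1,x_3)+d_C(x_1,x_4)+d_C(x_2,x_5)\leqslant 12$.
   Context: A chorded cycle is a cycle together with an edge of the graph, not on the cycle, joining two vertices of the cycle. A minimal $r$-system of chorded cycles in $G$ is a collection of $r$ pairwise vertex-disjoint chorded cycles of $G$ whose total number of vertices is as small as possible among all such collections. For vertices $x,y$, $d_C(x,y)=|(N_G(x)\cup N_G(y))\cap V(C)|$. *)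

(* Defs.v *)
From mathcomp Require Import all_boot.
Set Implicit Arguments. Unset Strict Implicit. Unset Printing Implicit Defensive.

Section Defs.
Variable T : finType.
Variable e : rel T.

Definition simple_graph : Prop := symmetric e /\ irreflexive e.

Definition is_cycle (c : seq T) : bool :=
  [&& uniq c, 2 < size c & cycle e c].

Definition chorded_cycle (c : seq T) : bool :=
  is_cycle c &&
  [exists x : T, exists y : T,
     [&& x \in c, y \in c, e x y, y != next c x & x != next c y]].

Definition r_system (r : nat) (F : 'I_r -> seq T) : Prop :=
  (forall i, chorded_cycle (F i)) /\
  (forall i j, i != j -> [disjoint F i & F j]).

Definition total_vertices (r : nat) (F : 'I_r -> seq T) : nat :=
  \sum_(i < r) size (F i).

Definition minimal_r_system (r : nat) (F : 'I_r -> seq T) : Prop :=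
  r_system F /\
  forall F' : 'I_r -> seq T, r_system F' -> total_vertices F <= total_vertices F'.

Definition dC (c : seq T) (x y : T) : nat :=
  #|[set v : T | (v \in c) && (e x v || e y v)]|.

Definition outside (r : nat) (F : 'I_r -> seq T) (v : T) : bool :=
  [forall i : 'I_r, v \notin F i].

Definition path_in_H (r : nat) (F : 'I_r -> seq T) (x1 : T) (s : seq T) : bool :=
  [&& uniq (x1 :: s), path e x1 s & all (outside F) (x1 :: s)].

End Defs.

(* Main.v *)
Require Import Defs.
From mathcomp Require Import all_boot.
From mathcomp Require Import zify.
Set Implicit Arguments. Unset Strict Implicit. Unset Printing Implicit Defensive.

Lemma outside_notin (T : finType) r (F : 'I_r -> seq T) v k :
  outside F v -> v \notin F k.
Proof. by move/forallP. Qed.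

Lemma minimal_repl (T : finType) (e : rel T) r (F : 'I_r -> seq T) i c :
  minimal_r_system e F -> chorded_cycle e c ->
  {subset c <= [pred v | (v \in F i) || outside F v]} -> size (F i) <= size c.
Proof.
case=> [[Fch Fdis] Fmin] cch csub.
pose F' := fun k => if k == i then c else F k.
have rs : r_system e F'.
  split=> [k|k l kl]; rewrite /F'; first by case: ifP.
  have dis_c : forall l, l != i -> [disjoint c & F l].
    move=> l' li; rewrite disjoint_has; apply/hasPn => v /csub /orP [vi|vo].
      by rewrite /= (disjointFr (Fdis _ _ (negbT _)) vi) // eq_sym; apply/negbTE.
    by rewrite /= (negbTE (outside_notin _ vo)).
  case: ifPn => [/eqP ki|ki]; case: ifPn => [/eqP li|li].
  - by subst; rewrite eqxx in kl.
  - by apply: dis_c.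
  - by rewrite disjoint_sym; apply: dis_c.
  - exact: Fdis.
have := Fmin F' rs; rewrite /total_vertices (bigD1 i) //= [X in _ <= X -> _](bigD1 i) //=.
have -> : F' i = c by rewrite /F' eqxx.
rewrite [X in _ <= _ + X -> _](eq_bigr (fun k => size (F k))); last first.
  by move=> k /negbTE; rewrite /F' => ->.
by rewrite leq_add2r.
Qed.

Lemma next_mid (T : eqType) (s1 s2 : seq T) x y :
  uniq (s1 ++ x :: y :: s2) -> next (s1 ++ x :: y :: s2) x = y.
Proof.
move=> u; rewrite next_nth mem_cat inE eqxx orbT.
have xs1 : x \notin s1 by move: u; rewrite cat_uniq /= => /and3P [_ /norP [] ].
rewrite index_cat (negbTE xs1) /= eqxx addn0.
case: s1 {u} xs1 => [|z s1] //= _.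
by rewrite nth_cat ltnNge leqnSn /= subSnn.
Qed.

Lemma next_map_in (T1 T2 : eqType) (f : T1 -> T2) (s : seq T1) x :
  {in s &, injective f} -> uniq s -> x \in s -> next (map f s) (f x) = f (next s x).
Proof.
move=> inj u xs; rewrite !next_nth map_f // xs.
have ix : index (f x) (map f s) = index x s.
  elim: s inj u xs => [|z s IH] //= inj /andP [zs u].
  rewrite inE => /orP [/eqP ->|xs]; first by rewrite !eqxx.
  have -> : (z == x) = false by apply/negbTE; apply: contraNneq zs => ->.
  have -> : (f z == f x) = false.
    apply/negbTE/eqP => /inj; rewrite !inE eqxx xs orbT => /(_ isT isT) ezx.
    by move: zs; rewrite ezx xs.
  by rewrite IH // => a b ia ib; apply: inj; rewrite inE ?ia ?ib orbT.
case: s inj u xs ix => [|z s] //= inj u xs ->.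
have [lt|ge] := ltnP (index x (z :: s)) (size s); first by rewrite (nth_map z).
by rewrite !nth_default ?size_map.
Qed.

Lemma cycle_nth_edge (T : eqType) (e : rel T) (a : seq T) x0 u :
  cycle e a -> u < size a -> e (nth x0 a u) (nth x0 a (u.+1 %% size a)).
Proof.
case: a => [|y p] //= /(pathP x0) H ult.
have := H u; rewrite size_rcons => /(_ ult).
rewrite -rcons_cons nth_rcons /= ult.
rewrite nth_rcons; case: ltngtP => [lt|gt|eq] //.
- by rewrite modn_small //= ltnS.
- by move: ult; rewrite ltnS leqNgt gt.
- by rewrite eq modnn.
Qed.

Lemma arc_bound (T : finType) (e : rel T) r (F : 'I_r -> seq T) i v X Y Z Q1 Q2 Q3 :
  symmetric e -> minimal_r_system e F ->
  uniq (X :: Q1 ++ Y :: Q2 ++ Z :: Q3) -> cycle e (X :: Q1 ++ Y :: Q2 ++ Z :: Q3) ->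
  {subset X :: Q1 ++ Y :: Q2 ++ Z :: Q3 <= F i} -> outside F v ->
  e v X -> e v Y -> e v Z -> size (F i) <= size Q1 + size Q2 + 4.
Proof.
move=> sym mF u cyc sub vo eX eY eZ.
have vc : v \notin X :: Q1 ++ Y :: Q2 ++ Z :: Q3.
  apply/negP => vin; move: (sub _ vin); apply/negP; exact: (outside_notin i vo).
pose P := X :: Q1 ++ Y :: Q2 ++ [:: Z].
have eqc : X :: Q1 ++ Y :: Q2 ++ Z :: Q3 = P ++ Q3 by rewrite /P /= -catA /= -catA.
rewrite eqc in u cyc vc sub.
have uP : uniq P by move: u; rewrite cat_uniq => /andP [].
have vP : v \notin P by move: vc; rewrite mem_cat negb_or => /andP [].
have pP : path e X (Q1 ++ Y :: Q2 ++ [:: Z]).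
  by move: cyc; rewrite /P /= rcons_cat cat_path => /andP [-> _].
have lastP : last X (Q1 ++ Y :: Q2 ++ [:: Z]) = Z.
  by rewrite last_cat /= last_cat.
have -> : size Q1 + size Q2 + 4 = size (v :: P).
  rewrite /P /= !size_cat /= size_cat /=; move: (size Q1) (size Q2) => a b; lia.
apply: (minimal_repl mF).
  apply/andP; split.
    rewrite /is_cycle cons_uniq vP uP /=.
    apply/andP; split; first by rewrite size_cat /= addnS.
    apply/andP; split; first exact: eX.
    rewrite rcons_path; apply/andP; split; first exact: pP.
    by rewrite lastP sym.
  have YP : Y \in P by rewrite /P !(inE, mem_cat) eqxx /= !orbT.
  have uvP : uniq (v :: P) by rewrite cons_uniq vP uP.
  have c1 : Y != next (v :: P) v.
    rewrite (@next_mid _ [::]) //.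
    by apply/eqP => YX; move: uP; rewrite /P cons_uniq mem_cat inE YX eqxx /= orbT.
  have c2 : v != next (v :: P) Y.
    have eqs : v :: P = (v :: X :: Q1) ++ Y :: head Z Q2 :: behead (Q2 ++ [:: Z]).
      have gen : forall q : seq T, v :: X :: Q1 ++ Y :: q ++ [:: Z] =
          (v :: X :: Q1) ++ Y :: head Z q :: behead (q ++ [:: Z]) by case.
      exact: gen.
    rewrite eqs next_mid; last by rewrite -eqs.
    have hP : head Z Q2 \in P.
      have gen : forall q : seq T, head Z q \in X :: Q1 ++ Y :: q ++ [:: Z].
        by case=> [|q Q2'] /=; rewrite !(inE, mem_cat) eqxx /= !orbT.
      exact: gen.
    by apply/eqP => vh; move: vP; rewrite -vh in hP; rewrite hP.
  apply/existsP; exists v; apply/existsP; exists Y.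
  by rewrite mem_head inE YP orbT eY c1 c2.
move=> w; rewrite inE => /orP [/eqP ->|wP]; first by apply/orP; right.
by apply/orP; left; apply: sub; rewrite mem_cat wP.
Qed.

Lemma arc3 (T : finType) (e : rel T) r (F : 'I_r -> seq T) i v X Y Z Q1 Q2 Q3 :
  symmetric e -> minimal_r_system e F ->
  uniq (X :: Q1 ++ Y :: Q2 ++ Z :: Q3) -> cycle e (X :: Q1 ++ Y :: Q2 ++ Z :: Q3) ->
  {subset X :: Q1 ++ Y :: Q2 ++ Z :: Q3 <= F i} ->
  size (X :: Q1 ++ Y :: Q2 ++ Z :: Q3) = size (F i) -> outside F v ->
  e v X -> e v Y -> e v Z -> size (F i) <= 6.
Proof.
move=> sym mF u cyc sub sz vo eX eY eZ.
have h1 := arc_bound sym mF u cyc sub vo eX eY eZ.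
have E2a : X :: Q1 ++ Y :: Q2 ++ Z :: Q3 = (X :: Q1) ++ (Y :: Q2 ++ Z :: Q3) by [].
have E2b : Y :: Q2 ++ Z :: Q3 ++ X :: Q1 = (Y :: Q2 ++ Z :: Q3) ++ (X :: Q1) by rewrite /= -catA.
have E3a : X :: Q1 ++ Y :: Q2 ++ Z :: Q3 = (X :: Q1 ++ Y :: Q2) ++ (Z :: Q3) by rewrite /= -catA.
have E3b : Z :: Q3 ++ X :: Q1 ++ Y :: Q2 = (Z :: Q3) ++ (X :: Q1 ++ Y :: Q2) by [].
have h2 : size (F i) <= size Q2 + size Q3 + 4.
  apply: (arc_bound (X := Y) (Y := Z) (Z := X) (Q3 := Q1) sym mF _ _ _ vo eY eZ eX).
  - by rewrite E2b uniq_catC -E2a.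
  - by rewrite E2b cycle_catC -E2a.
  - by move=> w; rewrite E2b mem_cat orbC -mem_cat -E2a => /sub.
have h3 : size (F i) <= size Q3 + size Q1 + 4.
  apply: (arc_bound (X := Z) (Y := X) (Z := Y) (Q3 := Q2) sym mF _ _ _ vo eZ eX eY).
  - by rewrite E3b uniq_catC -E3a.
  - by rewrite E3b cycle_catC -E3a.
  - by move=> w; rewrite E3b mem_cat orbC -mem_cat -E3a => /sub.
move: sz h1 h2 h3; rewrite /= !size_cat /= !size_cat /=.
move: (size Q1) (size Q2) (size Q3) (size (F i)) => a b c m; lia.
Qed.

Lemma three_aux (T : finType) (e : rel T) r (F : 'I_r -> seq T) i v a b c s :
  symmetric e -> minimal_r_system e F ->
  uniq (a :: s) -> cycle e (a :: s) -> {subset a :: s <= F i} ->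
  size (a :: s) = size (F i) -> b \in s -> c \in s -> b != c -> outside F v ->
  e v a -> e v b -> e v c -> size (F i) <= 6.
Proof.
move=> sym mF u cyc sub sz bs cs bc vo ea eb ec.
move: u cyc sub sz cs; case/splitPr: bs => p1 p2 u cyc sub sz.
rewrite mem_cat inE eq_sym (negbTE bc) /= => /orP [cp1|cp2].
  move: u cyc sub sz; case/splitPr: cp1 => q1 q2; rewrite -catA /= => u cyc sub sz.
  exact: (arc3 sym mF u cyc sub sz vo ea ec eb).
move: u cyc sub sz; case/splitPr: cp2 => q1 q2 u cyc sub sz.
exact: (arc3 sym mF u cyc sub sz vo ea eb ec).
Qed.

Lemma three_nbrs (T : finType) (e : rel T) r (F : 'I_r -> seq T) i v a b c :
  symmetric e -> minimal_r_system e F -> outside F v ->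
  a \in F i -> b \in F i -> c \in F i -> a != b -> a != c -> b != c ->
  e v a -> e v b -> e v c -> size (F i) <= 6.
Proof.
move=> sym mF vo ai bi ci ab ac bc ea eb ec.
have [[Fch _] _] := mF.
have /and3P [u _ cyc] := (andP (Fch i)).1.
have := rot_index ai; set s := (drop _ _ ++ _) => Hr.
have bs : b \in s.
  by move: bi; rewrite -(mem_rot (index a (F i))) Hr inE eq_sym (negbTE ab).
have cs : c \in s.
  by move: ci; rewrite -(mem_rot (index a (F i))) Hr inE eq_sym (negbTE ac).
apply: (three_aux sym mF _ _ _ _ bs cs bc vo ea eb ec).
- by rewrite -Hr rot_uniq.
- by rewrite -Hr rot_cycle.
- by move=> w; rewrite -Hr mem_rot.
- by rewrite -Hr size_rot.
Qed.

Lemma nbr_le2 (T : finType) (e : rel T) r (F : 'I_r -> seq T) i v :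
  symmetric e -> minimal_r_system e F -> 7 <= size (F i) -> outside F v ->
  #|[set u | (u \in F i) && e v u]| <= 2.
Proof.
move=> sym mF big vo; rewrite leqNgt; apply/negP => H.
set A := [set u | _] in H.
have /card_gt0P [a aA] : 0 < #|A| by apply: leq_trans H.
have H1 := cardsD1 a A; rewrite aA in H1.
have /card_gt0P [b bA] : 0 < #|A :\ a| by move: H; rewrite H1 add1n ltnS; apply: leq_trans.
have H2 := cardsD1 b (A :\ a); rewrite bA in H2.
have /card_gt0P [c cA] : 0 < #|A :\ a :\ b| by move: H; rewrite H1 H2 !add1n !ltnS.
move: cA bA aA; rewrite !in_setD1 !in_set => /and3P [cb ca /andP [ci ec]] /andP [ba /andP [bi eb]] /andP [ai ea].
rewrite eq_sym in ba; rewrite eq_sym in ca; rewrite eq_sym in cb.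
have := three_nbrs sym mF vo ai bi ci ba ca cb ea eb ec.
by rewrite leqNgt big.
Qed.

Lemma dC_le (T : finType) (e : rel T) (c : seq T) x y :
  dC e c x y <= #|[set u | (u \in c) && e x u]| + #|[set u | (u \in c) && e y u]|.
Proof.
apply: leq_trans (leq_card_setU _ _).1.
apply: subset_leq_card; apply/subsetP => u; rewrite !in_set => /andP [uc /orP [h|h]];
  by rewrite uc h ?orbT.
Qed.

Definition cadj (m i j u v : nat) : bool :=
  (v == u.+1 %% m) || (u == v.+1 %% m) || ((u == i) && (v == j)) || ((u == j) && (v == i)).

Definition madj (m i j : nat) (rs : seq (seq bool)) (xe : seq (nat * nat)) (u v : nat) : bool :=
  if u < m then (if v < m then cadj m i j u v else nth false (nth [::] rs (v - m)) u)
  else if v < m then nth false (nth [::] rs (u - m)) v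
  else ((u - m, v - m) \in xe) || ((v - m, u - m) \in xe).

Fixpoint ext n (M : rel nat) (k : nat) (p : seq nat) : seq (seq nat) :=
  match k with
  | 0 => [:: p]
  | k'.+1 => if p is h :: _ then
      flatten [seq ext n M k' (w :: p) | w <- iota 0 n & if M h w then w \notin p else false]
    else [::]
  end.

Definition cands n (M : rel nat) (m : nat) : seq (seq nat) :=
  flatten [seq flatten [seq ext n M k [:: s] | k <- iota 3 (m - 4)] | s <- iota m (n - m)].

Definition chordb (T : eqType) (M : rel T) (s : seq T) :=
  if uniq s then if 2 < size s then if cycle M s then
   has (fun x => has (fun y => if M x y then if y != next s x then x != next s y else false else false) s) s
  else false else false else false.

Definition small m i j rs xe : bool :=
  let n := m + size rs in
  let M := madj m i j rs xe in
  has (fun s => if size s < m then chordb M s else false) (cands n M m).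

Fixpoint allrows m : seq (seq bool) :=
  if m is m'.+1 then [seq b :: r | b <- [:: false; true], r <- allrows m'] else [:: [::]].

Definition V1 m i j := [seq r <- allrows m | ~~ small m i j [:: r] [::]].
Definition succs m i j (V : seq (seq bool)) r := [seq r' <- V | ~~ small m i j [:: r; r'] [:: (0,1)]].
Definition look (tab : seq (seq bool * seq (seq bool))) r :=
  odflt [::] (omap snd (ohead [seq p <- tab | p.1 == r])).

Definition du (r1 r2 : seq bool) := count id [seq p.1 || p.2 | p <- zip r1 r2].

Definition check4 m i j :=
  let V := V1 m i j in
  let tab := [seq (r, succs m i j V r) | r <- V] in
  all (fun r1 => all (fun r2 => all (fun r3 => all (fun r4 =>
    if (du r1 r3 + du r1 r4 + du r2 r4 <= 12) then true
    else small m i j [:: r1; r2; r3; r4] [:: (0,1); (1,2); (2,3)])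
    (look tab r3)) (look tab r2)) (look tab r1)) V.

Definition check5 m i j (fl : bool) :=
  let V := V1 m i j in
  let tab := [seq (r, succs m i j V r) | r <- V] in
  all (fun r1 => all (fun r2 => all (fun r3 => all (fun r4 => all (fun r5 =>
    if ((du r1 r3 + du r2 r4 + du r3 r5 <= 12) && (fl ==> (du r1 r3 + du r1 r4 + du r2 r5 <= 12)))
     then true else small m i j [:: r1; r2; r3; r4; r5]
        ([:: (0,1); (1,2); (2,3); (3,4)] ++ (if fl then [:: (1,3)] else [::])))
    (look tab r4)) (if fl then [seq r <- look tab r3 | r \in look tab r2] else look tab r3))
    (look tab r2)) (look tab r1)) V.

Definition check_all m :=
  all (fun i => all (fun j =>
    if i < j then if j != i.+1 %% m then if i != j.+1 %% m then
      [&& check4 m i j, check5 m i j true & check5 m i j false]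
    else true else true else true) (iota 0 m)) (iota 0 m).

Definition rows (T : Type) (e : rel T) (a xs : seq T) : seq (seq bool) :=
  [seq [seq e x y | y <- a] | x <- xs].

Definition fm (T : Type) (a xs : seq T) (x0 : T) (u : nat) : T :=
  if u < size a then nth x0 a u else nth x0 xs (u - size a).

Lemma madj_sound (T : eqType) (e : rel T) (a xs : seq T) x0 i j xe u v :
  symmetric e -> cycle e a -> i < size a -> j < size a -> e (nth x0 a i) (nth x0 a j) ->
  (forall p, p \in xe -> e (nth x0 xs p.1) (nth x0 xs p.2)) ->
  u < size a + size xs -> v < size a + size xs ->
  madj (size a) i j (rows e a xs) xe u v -> e (fm a xs x0 u) (fm a xs x0 v).
Proof.
move=> sym cyc ia ja eij exe un vn; rewrite /madj /fm.
case: ifP => um; case: ifP => vm.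
- rewrite /cadj => /orP [/orP [/orP [/eqP ->|/eqP ->]|/andP [/eqP -> /eqP ->]]|/andP [/eqP -> /eqP ->]].
  + exact: cycle_nth_edge.
  + by rewrite sym; apply: cycle_nth_edge.
  + exact: eij.
  + by rewrite sym.
- have vx : v - size a < size xs by rewrite ltn_subLR // leqNgt vm.
  rewrite /rows (nth_map x0) // (nth_map x0) //.
  by rewrite sym.
- have ux : u - size a < size xs by rewrite ltn_subLR // leqNgt um.
  by rewrite /rows (nth_map x0) // (nth_map x0) //.
- by move=> /orP [/exe //|/exe]; rewrite sym.
Qed.

Lemma ext_all n M k p : all (fun u => u < n) p -> forall s, s \in ext n M k p -> all (fun u => u < n) s.
Proof.
elim: k p => [|k IH] p ap s /=; first by rewrite inE => /eqP ->.
case: p ap => [|h p] // ap /flatten_mapP [w]; rewrite mem_filter mem_iota /= => /andP [_ wn].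
by apply: IH; rewrite /= wn.
Qed.

Lemma cands_all n M m s : s \in cands n M m -> all (fun u => u < n) s.
Proof.
move=> /flatten_mapP [s0]; rewrite mem_iota => /andP [s0m s0n] /flatten_mapP [k _].
apply: ext_all; rewrite /= andbT.
lia.
Qed.

Lemma fm_inj (T : eqType) (a xs : seq T) x0 :
  uniq a -> uniq xs -> (forall x, x \in xs -> x \notin a) ->
  {in [pred u | u < size a + size xs] &, injective (fm a xs x0)}.
Proof.
move=> ua ux dis u v; rewrite !inE => un vn; rewrite /fm; case: ifP => um; case: ifP => vm.
- by move/eqP; rewrite nth_uniq // => /eqP.
- have vx : v - size a < size xs by rewrite ltn_subLR // leqNgt vm.
  move=> E; have := dis _ (mem_nth x0 vx); rewrite -E mem_nth //.
- have ux' : u - size a < size xs by rewrite ltn_subLR // leqNgt um.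
  move=> E; have := dis _ (mem_nth x0 ux'); rewrite E mem_nth //.
- have vx : v - size a < size xs by rewrite ltn_subLR // leqNgt vm.
  have ux' : u - size a < size xs by rewrite ltn_subLR // leqNgt um.
  move/eqP; rewrite nth_uniq // => /eqP; move: um vm; lia.
Qed.

Lemma chordb_real (T : finType) (e : rel T) (a xs : seq T) x0 i j xe s :
  symmetric e -> cycle e a -> i < size a -> j < size a -> e (nth x0 a i) (nth x0 a j) ->
  (forall p, p \in xe -> e (nth x0 xs p.1) (nth x0 xs p.2)) ->
  uniq a -> uniq xs -> (forall x, x \in xs -> x \notin a) ->
  all (fun u => u < size a + size xs) s ->
  chordb (madj (size a) i j (rows e a xs) xe) s -> chorded_cycle e (map (fm a xs x0) s).
Proof.
move=> sym cyc ia ja eij exe ua ux dis sn.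
set M := madj _ _ _ _ _.
have Ms : forall u v, u \in s -> v \in s -> M u v -> e (fm a xs x0 u) (fm a xs x0 v).
  move=> u v us vs; apply: madj_sound => //.
  - by move/allP: sn => /(_ u us).
  - by move/allP: sn => /(_ v vs).
have inj : {in s &, injective (fm a xs x0)}.
  move=> u v us vs; apply: fm_inj => //; rewrite inE.
  - by move/allP: sn => /(_ u us).
  - by move/allP: sn => /(_ v vs).
rewrite /chordb; case: ifP => us //; case: ifP => ss //; case: ifP => cs // hs.
apply/andP; split.
  rewrite /is_cycle (map_inj_in_uniq inj) us size_map ss /= cycle_map.
  apply: (sub_in_cycle (P := [pred u | u \in s])) cs; last by apply/allP.
  by move=> u v us' vs'; apply: Ms.
case/hasP: hs => x xs' /hasP [y ys]; case: ifP => // Mxy; case: ifP => // ynx xny.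
apply/existsP; exists (fm a xs x0 x); apply/existsP; exists (fm a xs x0 y).
rewrite !map_f // Ms //= !next_map_in //.
apply/andP; split.
  apply: contra ynx => /eqP /inj -> //; by rewrite mem_next.
apply: contra xny => /eqP /inj -> //; by rewrite mem_next.
Qed.

Lemma small_false (T : finType) (e : rel T) r (F : 'I_r -> seq T) k (a xs : seq T) x0 i j xe :
  symmetric e -> minimal_r_system e F -> cycle e a -> uniq a -> {subset a <= F k} ->
  size a = size (F k) ->
  i < size a -> j < size a -> e (nth x0 a i) (nth x0 a j) ->
  (forall p, p \in xe -> e (nth x0 xs p.1) (nth x0 xs p.2)) ->
  uniq xs -> all (outside F) xs ->
  small (size a) i j (rows e a xs) xe = false.
Proof.
move=> sym mF cyc ua sub sz ia ja eij exe ux ox.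
have dis : forall x, x \in xs -> x \notin a.
  move=> x xx; apply/negP => /sub; apply/negP; apply: (outside_notin k).
  by move/allP: ox => /(_ x xx).
apply/negP => /hasP [s sc]; case: ifP => // lt ch.
have sn : all (fun u => u < size a + size xs) s.
  by have := cands_all sc; rewrite /rows size_map.
have cc := chordb_real sym cyc ia ja eij exe ua ux dis sn ch.
suff : size (F k) <= size s by rewrite -sz leqNgt lt.
rewrite -(size_map (fm a xs x0)); apply: (minimal_repl mF cc).
move=> w /mapP [u us ->]; rewrite /fm /=; case: ifP => um.
  by apply/orP; left; apply: sub; rewrite mem_nth.
have ux' : u - size a < size xs.
  by move/allP: sn => /(_ u us); rewrite ltn_subLR // leqNgt um.
by apply/orP; right; move/allP: ox => /(_ _ (mem_nth x0 ux')).
Qed.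

Lemma allrows_mem m r : size r = m -> r \in allrows m.
Proof.
elim: m r => [|m IH] [|b r] // [sr]; last first.
  change (b :: r \in [seq b :: r | b <- [:: false; true], r <- allrows m]).
apply: (allpairs_f (fun b r => b :: r)); first by case: b.
exact: IH.
Qed.

Lemma look_map (V : seq (seq bool)) g r : r \in V ->
  look [seq (r', g r') | r' <- V] r = g r.
Proof.
rewrite /look; elim: V => [|r0 V IH] //=; rewrite inE.
have [-> _|ne /= rV] := eqVneq r r0; first by [].
exact: IH.
Qed.

Lemma du_rows (T : Type) (e : rel T) (a : seq T) x y :
  du [seq e x v | v <- a] [seq e y v | v <- a] = count (fun v => e x v || e y v) a.
Proof. by rewrite /du zip_map -map_comp count_map. Qed.

Lemma dC_count (T : finType) (e : rel T) (c : seq T) x y :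
  uniq c -> dC e c x y = count (fun v => e x v || e y v) c.
Proof.
move=> uc; rewrite /dC -size_filter.
rewrite -(card_uniqP (filter_uniq (fun v => e x v || e y v) uc)).
by apply: eq_card => v; rewrite in_set mem_filter andbC.
Qed.

Lemma next_idx (T : eqType) (s : seq T) x0 k :
  uniq s -> k < size s -> next s (nth x0 s k) = nth x0 s (k.+1 %% size s).
Proof.
move=> us ks; rewrite next_nth mem_nth //.
case: s us ks => [|y p] // us ks.
rewrite (index_uniq x0) //.
have [lt|ge] := ltnP k (size p).
  by rewrite modn_small //= (set_nth_default y).
have -> : k = size p by apply/eqP; rewrite eqn_leq ge -ltnS ks.
by rewrite modnn nth_default.
Qed.

Lemma check_all_use m i j : check_all m -> i < j -> j < m -> j != i.+1 %% m -> i != j.+1 %% m ->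
  [&& check4 m i j, check5 m i j true & check5 m i j false].
Proof.
move=> /allP /(_ i) H ij jm h1 h2.
have /H /allP /(_ j) : i \in iota 0 m by rewrite mem_iota /=; lia.
rewrite mem_iota /= jm ij h1 h2; exact.
Qed.

Lemma chord_setup (T : finType) (e : rel T) r (F : 'I_r -> seq T) k x0 :
  symmetric e -> irreflexive e -> minimal_r_system e F ->
  exists i j, [/\ i < j, j < size (F k), j != i.+1 %% size (F k), i != j.+1 %% size (F k) &
                  e (nth x0 (F k) i) (nth x0 (F k) j)].
Proof.
move=> sym irr [[Fch _] _].
have /andP [/and3P [u _ cyc] /existsP [u0 /existsP [v0 /and5P [u0i v0i euv c1 c2]]]] := Fch k.
set a := F k in u cyc u0i v0i c1 c2 *.
set i0 := index u0 a; set j0 := index v0 a.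
have eu : nth x0 a i0 = u0 by rewrite nth_index.
have ev : nth x0 a j0 = v0 by rewrite nth_index.
have i0s : i0 < size a by rewrite index_mem.
have j0s : j0 < size a by rewrite index_mem.
have h1 : j0 != i0.+1 %% size a.
  apply: contra c1 => /eqP E; rewrite -eu next_idx // -E ev.
  by [].
have h2 : i0 != j0.+1 %% size a.
  apply: contra c2 => /eqP E; rewrite -ev next_idx // -E eu.
  by [].
have h0 : i0 != j0.
  apply/eqP => E; move: euv; rewrite -eu -ev E irr; by [].
have [lt|gt] := ltnP i0 j0.
  by exists i0, j0; split => //; rewrite eu ev.
exists j0, i0; split => //.
- by rewrite ltn_neqAle eq_sym h0.
- by rewrite eu ev sym.
Qed.

Lemma main56_4 (T : finType) (e : rel T) r (F : 'I_r -> seq T) k x1 x2 x3 x4 :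
  symmetric e -> irreflexive e -> minimal_r_system e F -> check_all (size (F k)) ->
  uniq [:: x1; x2; x3; x4] -> all (outside F) [:: x1; x2; x3; x4] ->
  e x1 x2 -> e x2 x3 -> e x3 x4 ->
  dC e (F k) x1 x3 + dC e (F k) x1 x4 + dC e (F k) x2 x4 <= 12.
Proof.
move=> sym irr mF chk ux ox e12 e23 e34.
have [[Fch _] _] := mF; have /andP [/and3P [ua _ cyca] _] := Fch k.
have [i [j [ij jm h1 h2 eij]]] := chord_setup k x1 sym irr mF.
have /and3P [c4 _ _] := check_all_use chk ij jm h1 h2.
have SF : forall xs xe, uniq xs -> all (outside F) xs ->
    (forall p, p \in xe -> e (nth x1 xs p.1) (nth x1 xs p.2)) ->
    small (size (F k)) i j (rows e (F k) xs) xe = false.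
  move=> xs xe uxs oxs exe; apply: (small_false (x0 := x1) sym mF cyca ua) => //.
  by []. by apply: (ltn_trans ij).
have inV : forall x, outside F x -> [seq e x v | v <- F k] \in V1 (size (F k)) i j.
  move=> x ox'; rewrite mem_filter allrows_mem ?size_map // andbT.
  have := SF [:: x] [::] isT; rewrite /= ox' => /(_ isT); rewrite /rows /= => -> //.
pose V := V1 (size (F k)) i j.
have inS : forall x y, outside F x -> outside F y -> x != y -> e x y ->
    [seq e y v | v <- F k] \in look [seq (r, succs (size (F k)) i j V r) | r <- V] [seq e x v | v <- F k].
  move=> x y ox' oy' xy exy; rewrite look_map ?inV // mem_filter inV // andbT.
  have := SF [:: x; y] [:: (0, 1)]; rewrite /= ox' oy' inE xy => /(_ isT isT).
  rewrite /rows /= => -> // p; rewrite inE => /eqP -> //.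
move: ox => /and5P [o1 o2 o3 o4 _].
move: ux; rewrite /= !inE !negb_or => /andP [/and3P [n12 n13 n14] /andP [/andP [n23 n24] /andP [n34 _]]].
move: c4; rewrite /check4 -/V => /allP /(_ _ (inV x1 o1)) /allP /(_ _ (inS x1 x2 o1 o2 n12 e12)).
move=> /allP /(_ _ (inS x2 x3 o2 o3 n23 e23)) /allP /(_ _ (inS x3 x4 o3 o4 n34 e34)).
case: ifP => [B _|_].
  by move: B; rewrite !du_rows -!dC_count.
have := SF [:: x1; x2; x3; x4] [:: (0,1); (1,2); (2,3)].
rewrite /rows /= => -> //.
- by rewrite !inE !negb_or n12 n13 n14 n23 n24 n34.
- by rewrite o1 o2 o3 o4.
- by move=> p; rewrite !inE => /orP [/eqP ->|/orP [/eqP ->|/eqP ->]].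
Qed.

Lemma main56_5 (T : finType) (e : rel T) r (F : 'I_r -> seq T) k x1 x2 x3 x4 x5 :
  symmetric e -> irreflexive e -> minimal_r_system e F -> check_all (size (F k)) ->
  uniq [:: x1; x2; x3; x4; x5] -> all (outside F) [:: x1; x2; x3; x4; x5] ->
  e x1 x2 -> e x2 x3 -> e x3 x4 -> e x4 x5 ->
  dC e (F k) x1 x3 + dC e (F k) x2 x4 + dC e (F k) x3 x5 <= 12 /\
  (e x2 x4 -> dC e (F k) x1 x3 + dC e (F k) x1 x4 + dC e (F k) x2 x5 <= 12).
Proof.
move=> sym irr mF chk ux ox e12 e23 e34 e45.
have [[Fch _] _] := mF; have /andP [/and3P [ua _ cyca] _] := Fch k.
have [i [j [ij jm h1 h2 eij]]] := chord_setup k x1 sym irr mF.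
have /and3P [_ c5t c5f] := check_all_use chk ij jm h1 h2.
have SF : forall xs xe, uniq xs -> all (outside F) xs ->
    (forall p, p \in xe -> e (nth x1 xs p.1) (nth x1 xs p.2)) ->
    small (size (F k)) i j (rows e (F k) xs) xe = false.
  move=> xs xe uxs oxs exe; apply: (small_false (x0 := x1) sym mF cyca ua) => //.
  by []. by apply: (ltn_trans ij).
have inV : forall x, outside F x -> [seq e x v | v <- F k] \in V1 (size (F k)) i j.
  move=> x ox'; rewrite mem_filter allrows_mem ?size_map // andbT.
  have := SF [:: x] [::] isT; rewrite /= ox' => /(_ isT); rewrite /rows /= => -> //.
pose V := V1 (size (F k)) i j.
have inS : forall x y, outside F x -> outside F y -> x != y -> e x y ->
    [seq e y v | v <- F k] \in look [seq (r, succs (size (F k)) i j V r) | r <- V] [seq e x v | v <- F k].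
  move=> x y ox' oy' xy exy; rewrite look_map ?inV // mem_filter inV // andbT.
  have := SF [:: x; y] [:: (0, 1)]; rewrite /= ox' oy' inE xy => /(_ isT isT).
  rewrite /rows /= => -> // p; rewrite inE => /eqP -> //.
move: ox => /= /and5P [o1 o2 o3 o4 /andP [o5 _]].
move: ux; rewrite /= !inE !negb_or.
move=> /andP [/and4P [n12 n13 n14 n15] /andP [/and3P [n23 n24 n25] /andP [/andP [n34 n35] /andP [n45 _]]]].
have key : forall fl, check5 (size (F k)) i j fl -> (fl -> e x2 x4) ->
    (du [seq e x1 v | v <- F k] [seq e x3 v | v <- F k] + du [seq e x2 v | v <- F k] [seq e x4 v | v <- F k]
      + du [seq e x3 v | v <- F k] [seq e x5 v | v <- F k] <= 12) &&
    (fl ==> (du [seq e x1 v | v <- F k] [seq e x3 v | v <- F k] + du [seq e x1 v | v <- F k] [seq e x4 v | v <- F k]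
      + du [seq e x2 v | v <- F k] [seq e x5 v | v <- F k] <= 12)).
  move=> fl c5 f24.
  have r4in : [seq e x4 v | v <- F k] \in (if fl then [seq r <- look [seq (r, succs (size (F k)) i j V r) | r <- V] [seq e x3 v | v <- F k]
       | r \in look [seq (r, succs (size (F k)) i j V r) | r <- V] [seq e x2 v | v <- F k]]
       else look [seq (r, succs (size (F k)) i j V r) | r <- V] [seq e x3 v | v <- F k]).
    case: (fl) f24 => [/(_ isT) e24|_]; last exact: inS.
    by rewrite mem_filter !inS.
  move: c5; rewrite /check5 -/V => /allP /(_ _ (inV x1 o1)) /allP /(_ _ (inS x1 x2 o1 o2 n12 e12)).
  move=> /allP /(_ _ (inS x2 x3 o2 o3 n23 e23)) /allP /(_ _ r4in) /allP /(_ _ (inS x4 x5 o4 o5 n45 e45)).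
  case: ifP => [B _|_] //.
  have := SF [:: x1; x2; x3; x4; x5] ([:: (0,1); (1,2); (2,3); (3,4)] ++ (if fl then [:: (1,3)] else [::])).
  rewrite /rows /= => -> //.
  - by rewrite !inE !negb_or n12 n13 n14 n15 n23 n24 n25 n34 n35 n45.
  - by rewrite o1 o2 o3 o4 o5.
  - move=> p; case: (fl) f24 => [/(_ isT) e24|_]; rewrite ?mem_cat !inE => H;
      repeat (case/orP: H => [/eqP -> //|H]); by move/eqP: H => ->.
split.
  have f0 : false -> e x2 x4 by [].
  by have /andP [B _] := key _ c5f f0; move: B; rewrite !du_rows -!dC_count.
move=> e24; have /andP [_ B] := key _ c5t (fun _ => e24).
by move: B; rewrite /= !du_rows -!dC_count.
Qed.

Lemma gen4 (T : finType) (e : rel T) r (F : 'I_r -> seq T) k u v :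
  symmetric e -> minimal_r_system e F -> (size (F k) <= 4) || (7 <= size (F k)) ->
  outside F u -> outside F v -> dC e (F k) u v <= 4.
Proof.
move=> sym mF /orP [sm|big] ou ov.
  apply: leq_trans sm; apply: leq_trans (card_size (F k)).
  by apply: subset_leq_card; apply/subsetP => w; rewrite in_set => /andP [].
apply: leq_trans (dC_le _ _ _ _) _.
by rewrite -[4]/(2 + 2) leq_add // nbr_le2.
Qed.

Lemma chk56 : check_all 5 && check_all 6.
Proof. vm_cast_no_check (erefl true). Qed.

Unset Implicit Arguments.

Theorem lemma3p4 (T : finType) (e : rel T) (r : nat) (F : 'I_r -> seq T)
    (i : 'I_r) (x1 : T) (s : seq T) :
  simple_graph e -> 1 <= r -> minimal_r_system e F ->
  path_in_H e F x1 s -> 4 <= size (x1 :: s) ->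
  let x k := nth x1 (x1 :: s) k.-1 in
  let C := F i in
  dC e C (x 1) (x 3) + dC e C (x 1) (x 4) + dC e C (x 2) (x 4) <= 12 /\
  (5 <= size (x1 :: s) ->
     dC e C (x 1) (x 3) + dC e C (x 2) (x 4) + dC e C (x 3) (x 5) <= 12 /\
     (e (x 2) (x 4) ->
        dC e C (x 1) (x 3) + dC e C (x 1) (x 4) + dC e C (x 2) (x 5) <= 12)).
Proof.
move=> [sym irr] _ mF /and3P [ux px ox] sz x C.
rewrite /x /C {x C}.
case: s ux px ox sz => [|y2 [|y3 [|y4 s']]] // ux px ox _ /=.
move: px => /= /and4P [e12 e23 e34 px].
have [small|mid] := boolP ((size (F i) <= 4) || (7 <= size (F i))).
  have G : forall u v, u \in x1 :: y2 :: y3 :: y4 :: s' -> v \in x1 :: y2 :: y3 :: y4 :: s' ->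
      dC e (F i) u v <= 4.
    move=> u v uin vin; apply: gen4 => //.
    - by move/allP: ox => /(_ u uin).
    - by move/allP: ox => /(_ v vin).
  have G3 : forall a b c d f g, a <= 4 -> b <= 4 -> c <= 4 -> a + b + c <= 12.
    move=> *; lia.
  split; first by apply: G3; apply: G; rewrite !inE eqxx ?orbT.
  case: s' ux ox px G => [|y5 s''] //= ux ox px G _.
  split; first by apply: G3; apply: G; rewrite !inE eqxx ?orbT.
  by move=> _; apply: G3; apply: G; rewrite !inE eqxx ?orbT.
have chk : check_all (size (F i)).
  have : (size (F i) == 5) || (size (F i) == 6) by move: mid; lia.
  by case/andP: chk56 => c5 c6; case/orP => /eqP ->.
have u4 : uniq [:: x1; y2; y3; y4].
  by move: ux; rewrite -[x1 :: _]/([:: x1; y2; y3; y4] ++ s') cat_uniq => /andP [].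
have o4 : all (outside F) [:: x1; y2; y3; y4].
  by move: ox; rewrite -[x1 :: _]/([:: x1; y2; y3; y4] ++ s') all_cat => /andP [].
split; first exact: (main56_4 sym irr mF chk u4 o4 e12 e23 e34).
case: s' ux ox px => [|y5 s''] // ux ox px _.
have u5 : uniq [:: x1; y2; y3; y4; y5].
  by move: ux; rewrite -[x1 :: _]/([:: x1; y2; y3; y4; y5] ++ s'') cat_uniq => /andP [].
have o5 : all (outside F) [:: x1; y2; y3; y4; y5].
  by move: ox; rewrite -[x1 :: _]/([:: x1; y2; y3; y4; y5] ++ s'') all_cat => /andP [].
move: px => /= /andP [e45 _].
exact: (main56_5 sym irr mF chk u5 o5 e12 e23 e34 e45).
Qed.
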